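(* Let $A,B,C$ be non-collinear points of the real affine plane. Let $A^{+},A^{-}$ be points on line $\overleftrightarrow{BC}$, $B^{+},B^{-}$ points on line $\overleftrightarrow{CA}$, and $C^{+},C^{-}$ points on line $\overleftrightarrow{AB}$, with $A^{+}\neq C$, $A^{-}\neq B$, $B^{+}\neq A$, $B^{-}\neq C$, $C^{+}\neq B$, $C^{-}\neq A$, and define $$a^{+}=\frac{|BA^{+}|}{|A^{+}C|},\quad b^{+}=\frac{|CB^{+}|}{|B^{+}A|},\quad c^{+}=\frac{|AC^{+}|}{|C^{+}B|},\quad a^{-}=\frac{|CA^{-}|}{|A^{-}B|},\quad b^{-}=\frac{|AB^{-}|}{|B^{-}C|},\quad c^{-}=\frac{|BC^{-}|}{|C^{-}A|}.$$ Suppose $(1+b^{-}+c^{+})(1+c^{-}+a^{+})(1+a^{-}+b^{+})\neq 0$, so that the points $X=\overleftrightarrow{BB^{-}}\cap\overleftrightarrow{CC^{+}}$, $Y=\overleftrightarrow{CC^{-}}\cap\overleftrightarrow{AA^{+}}$, $Z=\overleftrightarrow{AA^{-}}\cap\overleftrightarrow{BB^{+}}$ are finite points. Then the signed area of triangle $XYZ$ is $$|\triangle XYZ|=|\triangle ABC|\cdot\frac{a^{+}b^{+}c^{+}+a^{-}b^{-}c^{-}-a^{+}a^{-}-b^{+}b^{-}-c^{+}c^{-}+1}{(1+b^{-}+c^{+})(1+c^{-}+a^{+})(1+a^{-}+b^{+})}.$$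
   Context: Segment lengths are signed: for points on one of the lines $\overleftrightarrow{AB}$, $\overleftrightarrow{BC}$, $\overleftrightarrow{CA}$, $|PQ|$ is positive when $\overrightarrow{PQ}$ points in the direction of $\overrightarrow{AB}$, $\overrightarrow{BC}$, $\overrightarrow{CA}$ respectively; $|PP|/|PQ|=0$. Equivalently, e.g. $A^{+}=(B+a^{+}C)/(1+a^{+})$, $A^{-}=(a^{-}B+C)/(1+a^{-})$ as vectors, and similarly for the others. Triangle areas are signed: $|\triangle XYZ|$ and $|\triangle ABC|$ have the same sign exactly when the vertex paths $X$-$Y$-$Z$-$X$ and $A$-$B$-$C$-$A$ traverse their triangles in the same rotational direction. *)

(* Defs.v *)
From Stdlib Require Import Reals Lra.
Open Scope R_scope.

Definition point := (R * R)%type.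

Definition vsub (P Q : point) : point := (fst P - fst Q, snd P - snd Q).
Definition dot (u v : point) : R := fst u * fst v + snd u * snd v.
Definition cross (u v : point) : R := fst u * snd v - snd u * fst v.
Definition vnorm (u : point) : R := sqrt (dot u u).

(* X lies on the line through P and Q (used only with P <> Q). *)
Definition on_line (P Q X : point) : Prop := cross (vsub Q P) (vsub X P) = 0.

(* Signed length |PQ| of a segment on a line whose positive direction is d
   (d <> 0): the coordinate of Q - P along the unit vector d/|d|. *)
Definition slen (d P Q : point) : R := dot (vsub Q P) d / vnorm d.

(* Signed area of triangle PQR (positive iff P-Q-R-P is counterclockwise). *)
Definition sarea (P Q S : point) : R := cross (vsub Q P) (vsub S P) / 2.

(* Main.v *)
Require Import Defs.
From Stdlib Require Import Reals.
From Stdlib Require Import Lra Psatz.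
Open Scope R_scope.

Definition aff (A B C : point) (p : point) : point :=
  (fst A + fst p * (fst B - fst A) + snd p * (fst C - fst A),
   snd A + fst p * (snd B - snd A) + snd p * (snd C - snd A)).

Lemma aff_ex A B C X : cross (vsub B A) (vsub C A) <> 0 ->
  exists p, X = aff A B C p.
Proof.
  intros HD.
  exists (cross (vsub X A) (vsub C A) / cross (vsub B A) (vsub C A),
          cross (vsub B A) (vsub X A) / cross (vsub B A) (vsub C A)).
  unfold cross, vsub in *; simpl in *. unfold aff; simpl.
  destruct X as [x y]; simpl; f_equal; field; auto.
Qed.

Lemma cross_aff A B C p q r s :
  cross (vsub (aff A B C p) (aff A B C q)) (vsub (aff A B C r) (aff A B C s)) =
  cross (vsub B A) (vsub C A) * cross (vsub p q) (vsub r s).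
Proof. unfold cross, vsub, aff; simpl; ring. Qed.

Lemma online_aff A B C P Q X p q x : cross (vsub B A) (vsub C A) <> 0 ->
  P = aff A B C p -> Q = aff A B C q -> X = aff A B C x ->
  on_line P Q X -> on_line p q x.
Proof.
  intros HD -> -> ->. unfold on_line. rewrite cross_aff. intro H.
  destruct (Rmult_integral _ _ H); [contradiction|auto].
Qed.

Lemma sarea_aff A B C p q r :
  sarea (aff A B C p) (aff A B C q) (aff A B C r) = sarea A B C * (2 * sarea p q r).
Proof. unfold sarea. rewrite cross_aff. field. Qed.

Lemma affA A B C : A = aff A B C (0,0).
Proof. unfold aff; simpl; destruct A; simpl; f_equal; ring. Qed.
Lemma affB A B C : B = aff A B C (1,0).
Proof. unfold aff; simpl; destruct B; simpl; f_equal; ring. Qed.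
Lemma affC A B C : C = aff A B C (0,1).
Proof. unfold aff; simpl; destruct C; simpl; f_equal; ring. Qed.

Lemma ratio_lem d P X Q t1 t2 : dot d d <> 0 ->
  vsub X P = (t1 * fst d, t1 * snd d) -> vsub Q X = (t2 * fst d, t2 * snd d) ->
  t2 <> 0 -> slen d P X / slen d X Q = t1 / t2.
Proof.
  intros Hd H1 H2 Ht. unfold slen. rewrite H1, H2.
  assert (Hv : vnorm d <> 0).
  { unfold vnorm. apply Rgt_not_eq. apply sqrt_lt_R0.
    unfold dot in *. destruct (Rle_lt_dec (fst d * fst d + snd d * snd d) 0); [|lra].
    exfalso. apply Hd. nra. }
  unfold dot in *; simpl. field. repeat split; auto.
  replace (t2 * fst d * fst d + t2 * snd d * snd d) with
    (t2 * (fst d * fst d + snd d * snd d)) by ring.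
  apply Rmult_integral_contrapositive; auto.
Qed.

Lemma dot_nz u w : cross u w <> 0 -> dot u u <> 0.
Proof.
  intros H Hd. apply H. unfold dot, cross in *.
  assert (fst u = 0) by nra. assert (snd u = 0) by nra.
  rewrite H0, H1; ring.
Qed.

Lemma solve2 x y p1 q1 k1 p2 q2 k2 :
  p1*x+q1*y = k1 -> p2*x+q2*y = k2 -> p1*q2 - p2*q1 <> 0 ->
  x = (k1*q2 - k2*q1)/(p1*q2-p2*q1) /\ y = (p1*k2 - p2*k1)/(p1*q2-p2*q1).
Proof. intros H1 H2 H. subst k1 k2. split; field; auto. Qed.

Theorem theorem5 (A B C Ap Am Bp Bm Cp Cm X Y Z : point) :
  sarea A B C <> 0 ->
  on_line B C Ap -> on_line B C Am ->
  on_line C A Bp -> on_line C A Bm ->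
  on_line A B Cp -> on_line A B Cm ->
  Ap <> C -> Am <> B -> Bp <> A -> Bm <> C -> Cp <> B -> Cm <> A ->
  let ap := slen (vsub C B) B Ap / slen (vsub C B) Ap C in
  let bp := slen (vsub A C) C Bp / slen (vsub A C) Bp A in
  let cp := slen (vsub B A) A Cp / slen (vsub B A) Cp B in
  let am := slen (vsub C B) C Am / slen (vsub C B) Am B in
  let bm := slen (vsub A C) A Bm / slen (vsub A C) Bm C in
  let cm := slen (vsub B A) B Cm / slen (vsub B A) Cm A in
  (1 + bm + cp) * (1 + cm + ap) * (1 + am + bp) <> 0 ->
  on_line B Bm X -> on_line C Cp X ->
  on_line C Cm Y -> on_line A Ap Y ->
  on_line A Am Z -> on_line B Bp Z ->
  sarea X Y Z =
    sarea A B C *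
    ((ap * bp * cp + am * bm * cm - ap * am - bp * bm - cp * cm + 1) /
     ((1 + bm + cp) * (1 + cm + ap) * (1 + am + bp))).
Proof.
  intros HS HAp HAm HBp HBm HCp HCm nAp nAm nBp nBm nCp nCm ap bp cp am bm cm
    Hprod HX1 HX2 HY1 HY2 HZ1 HZ2.
  assert (HD : cross (vsub B A) (vsub C A) <> 0).
  { intro H; apply HS; unfold sarea; rewrite H; lra. }
  destruct (aff_ex A B C Ap HD) as [[u1 a1] ->].
  destruct (aff_ex A B C Am HD) as [[u2 a2] ->].
  destruct (aff_ex A B C Bp HD) as [[u3 q1] ->].
  destruct (aff_ex A B C Bm HD) as [[u4 q2] ->].
  destruct (aff_ex A B C Cp HD) as [[c1 u5] ->].
  destruct (aff_ex A B C Cm HD) as [[c2 u6] ->].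
  destruct (aff_ex A B C X HD) as [[x1 x2] ->].
  destruct (aff_ex A B C Y HD) as [[y1 y2] ->].
  destruct (aff_ex A B C Z HD) as [[z1 z2] ->].
  pose proof (affA A B C) as EA. pose proof (affB A B C) as EB.
  pose proof (affC A B C) as EC.
  pose proof (online_aff _ _ _ _ _ _ _ _ _ HD EB EC eq_refl HAp) as e1.
  pose proof (online_aff _ _ _ _ _ _ _ _ _ HD EB EC eq_refl HAm) as e2.
  pose proof (online_aff _ _ _ _ _ _ _ _ _ HD EC EA eq_refl HBp) as e3.
  pose proof (online_aff _ _ _ _ _ _ _ _ _ HD EC EA eq_refl HBm) as e4.
  pose proof (online_aff _ _ _ _ _ _ _ _ _ HD EA EB eq_refl HCp) as e5.
  pose proof (online_aff _ _ _ _ _ _ _ _ _ HD EA EB eq_refl HCm) as e6.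
  pose proof (online_aff _ _ _ _ _ _ _ _ _ HD EB eq_refl eq_refl HX1) as f1.
  pose proof (online_aff _ _ _ _ _ _ _ _ _ HD EC eq_refl eq_refl HX2) as f2.
  pose proof (online_aff _ _ _ _ _ _ _ _ _ HD EC eq_refl eq_refl HY1) as f3.
  pose proof (online_aff _ _ _ _ _ _ _ _ _ HD EA eq_refl eq_refl HY2) as f4.
  pose proof (online_aff _ _ _ _ _ _ _ _ _ HD EA eq_refl eq_refl HZ1) as f5.
  pose proof (online_aff _ _ _ _ _ _ _ _ _ HD EB eq_refl eq_refl HZ2) as f6.
  unfold on_line, cross, vsub in e1, e2, e3, e4, e5, e6, f1, f2, f3, f4, f5, f6;
    simpl in e1, e2, e3, e4, e5, e6, f1, f2, f3, f4, f5, f6.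
  assert (u1 = 1 - a1) by lra. assert (u2 = 1 - a2) by lra.
  assert (u3 = 0) by lra. assert (u4 = 0) by lra.
  assert (u5 = 0) by lra. assert (u6 = 0) by lra.
  subst u1 u2 u3 u4 u5 u6.
  assert (na1 : 1 - a1 <> 0).
  { intro h; apply nAp. transitivity (aff A B C (0,1)); [|symmetry; exact EC].
    apply f_equal; f_equal; lra. }
  assert (na2 : a2 <> 0).
  { intro h; apply nAm. transitivity (aff A B C (1,0)); [|symmetry; exact EB].
    apply f_equal; f_equal; lra. }
  assert (nq1 : q1 <> 0).
  { intro h; apply nBp. transitivity (aff A B C (0,0)); [|symmetry; exact EA].
    apply f_equal; f_equal; lra. }
  assert (nq2 : 1 - q2 <> 0).
  { intro h; apply nBm. transitivity (aff A B C (0,1)); [|symmetry; exact EC].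
    apply f_equal; f_equal; lra. }
  assert (nc1 : 1 - c1 <> 0).
  { intro h; apply nCp. transitivity (aff A B C (1,0)); [|symmetry; exact EB].
    apply f_equal; f_equal; lra. }
  assert (nc2 : c2 <> 0).
  { intro h; apply nCm. transitivity (aff A B C (0,0)); [|symmetry; exact EA].
    apply f_equal; f_equal; lra. }
  assert (dCB : dot (vsub C B) (vsub C B) <> 0).
  { apply (dot_nz _ (vsub A B)). intro h; apply HD; rewrite <- h.
    unfold cross, vsub; simpl; ring. }
  assert (dAC : dot (vsub A C) (vsub A C) <> 0).
  { apply (dot_nz _ (vsub B C)). intro h; apply HD; rewrite <- h.
    unfold cross, vsub; simpl; ring. }
  assert (dBA : dot (vsub B A) (vsub B A) <> 0) by (apply (dot_nz _ _ HD)).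
  assert (Hap : ap = a1 / (1 - a1)).
  { unfold ap. apply ratio_lem; auto; unfold vsub, aff; simpl; f_equal; ring. }
  assert (Ham : am = (a2 - 1) / (- a2)).
  { unfold am. apply ratio_lem; auto; [unfold vsub, aff; simpl; f_equal; ring
      | unfold vsub, aff; simpl; f_equal; ring | lra]. }
  assert (Hbp : bp = (1 - q1) / q1).
  { unfold bp. apply ratio_lem; auto; unfold vsub, aff; simpl; f_equal; ring. }
  assert (Hbm : bm = (- q2) / (q2 - 1)).
  { unfold bm. apply ratio_lem; auto; [unfold vsub, aff; simpl; f_equal; ring
      | unfold vsub, aff; simpl; f_equal; ring | lra]. }
  assert (Hcp : cp = c1 / (1 - c1)).
  { unfold cp. apply ratio_lem; auto; unfold vsub, aff; simpl; f_equal; ring. }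
  assert (Hcm : cm = (c2 - 1) / (- c2)).
  { unfold cm. apply ratio_lem; auto; [unfold vsub, aff; simpl; f_equal; ring
      | unfold vsub, aff; simpl; f_equal; ring | lra]. }
  rewrite Hap, Ham, Hbp, Hbm, Hcp, Hcm in Hprod |- *.
  assert (HP : (1 + (- q2) / (q2 - 1) + c1 / (1 - c1)) *
               (1 + (c2 - 1) / (- c2) + a1 / (1 - a1)) *
               (1 + (a2 - 1) / (- a2) + (1 - q1) / q1) =
               (1 - q2 * c1) * ((1 - a1) + a1 * c2) * (a2 + q1 * (1 - a2)) /
               ((1 - q2) * (1 - c1) * (c2 * (1 - a1)) * (a2 * q1))).
  { field. repeat split; auto; lra. }
  assert (dX : 1 - q2 * c1 <> 0).
  { intro h; apply Hprod; rewrite HP, h; unfold Rdiv; ring. }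
  assert (dY : (1 - a1) + a1 * c2 <> 0).
  { intro h; apply Hprod; rewrite HP, h; unfold Rdiv; ring. }
  assert (dZ : a2 + q1 * (1 - a2) <> 0).
  { intro h; apply Hprod; rewrite HP, h; unfold Rdiv; ring. }
  destruct (solve2 x1 x2 (-q2) (-1) (-q2) 1 c1 c1) as [Ex1 Ex2];
    [clear - f1; nra | clear - f2; nra | clear - dX; intro h; apply dX; lra |].
  destruct (solve2 y1 y2 1 c2 c2 (-a1) (1-a1) 0) as [Ey1 Ey2];
    [clear - f3; nra | clear - f4; nra | clear - dY; intro h; apply dY; lra |].
  destruct (solve2 z1 z2 (-a2) (1-a2) 0 (-q1) (-1) (-q1)) as [Ez1 Ez2];
    [clear - f5; nra | clear - f6; nra | clear - dZ; intro h; apply dZ; lra |].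
  rewrite sarea_aff. apply f_equal. rewrite HP.
  subst x1 x2 y1 y2 z1 z2.
  unfold sarea, cross, vsub; simpl.
  clear - dX dY dZ na1 na2 nq1 nq2 nc1 nc2.
  field; repeat split; auto;
    try (intro h; apply dX; lra); try (intro h; apply dY; lra);
    try (intro h; apply dZ; lra); try lra.
Qed.
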